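(* Let $q\in(0,1]$. Consider the linear semi-infinite problem described in the context, and let $(\bar c,\bar b)\in\mathbb{R}^n\times\mathcal{C}(T,\mathbb{R})$ with $\mathcal{S}(\bar c,\bar b)=\{\bar x\}$, and assume $P(\bar c,\bar b)$ satisfies the Slater condition. Then $$\operatorname{clm}_q\mathcal{S}((\bar c,\bar b),\bar x)\le \operatorname{clm}_q\mathcal{S}_{\bar c}(\bar b,\bar x)\le \inf_{D\in\mathcal{K}_{\bar b}(\bar x)}\ \liminf_{x\to\bar x,\ f_D(x)>0} f_D(x)^{q-1}\, d(0,\partial f_D(x)).$$
   Context: Setting: $T$ is a compact subset of a metric space $Z$ with $T\neq Z$; $t\mapsto a_t\in\mathbb{R}^n$ is continuous on $T$; $g_t(x)=\langle a_t,x\rangle$ and $f\equiv0$. $\mathcal{C}(T,\mathbb{R})$ is the space of continuous $b:T\to\mathbb{R}$, $t\mapsto b_t$, with $\|b\|_\infty=\max_t|b_t|$. For $(c,b)\in\mathbb{R}^n\times\mathcal{C}(T,\mathbb{R})$, $P(c,b)$: minimize $\langle c,x\rangle$ subject to $\langle a_t,x\rangle\le b_t$, $t\in T$. Parameter norm $\|(c,b)\|=\max\{\|c\|,\|b\|_\infty\}$ (Euclidean norm on $\mathbb{R}^n$). $\mathcal{S}(c,b)$ is the optimal solution set, $\mathcal{S}_c(b):=\mathcal{S}(c,b)$. Slater condition: there is $\hat x$ with $g_t(\hat x)<b_t$ for all $t$. Active set $T_b(x)=\{t\in T: g_t(x)=b_t\}$. For a set-valued $S:Y\rightrightarrows X$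 between metric spaces and $(\bar y,\bar x)\in\operatorname{gph}S$, the $q$-order calmness modulus is $\operatorname{clm}_q S(\bar y,\bar x):=\liminf_{y\to\bar y,\ x\to\bar x,\ x\in S(y)} d(y,\bar y)^q/d(x,S(\bar y))$. $\mathcal{K}_{\bar b}(\bar x)$ is the family of sets $D\subset T_{\bar b}(\bar x)$ with $|D|\le n$ and $-(u+\bar c)\in\operatorname{cone}\{\partial g_t(\bar x): t\in D\}$ for some $u\in\partial f(\bar x)$, where cone denotes the convex conical hull, always containing $0_n$ (so $\operatorname{cone}(\emptyset)=\{0_n\}$), and $\partial$ is the convex subdifferential. For $D\in\mathcal{K}_{\bar b}(\bar x)$, $f_D(x):=\sup\{g_t(x)-\bar b_t,\ t\in T\setminus D;\ |g_t(x)-\bar b_t|,\ t\in D\}$. $d(0,A)=\inf_{a\in A}\|a\|$. *)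

(* Defs.v *)
From HB Require Import structures.
From mathcomp Require Import all_boot all_order all_algebra.
From mathcomp Require Import all_classical all_reals all_analysis.
Set Implicit Arguments. Unset Strict Implicit. Unset Printing Implicit Defensive.
Import Order.TTheory GRing.Theory Num.Theory.
Import numFieldNormedType.Exports.
Local Open Scope classical_set_scope.
Local Open Scope ring_scope.

Section LSIP.
Variables (R : realType) (n : nat).

Definition ip (u v : 'rV[R]_n) : R := \sum_(i < n) u ord0 i * v ord0 i.
Definition enorm (u : 'rV[R]_n) : R := Num.sqrt (ip u u).

(* distance (in \bar R, +oo for the empty set) from a point to a set *)
Definition edist_set (x : 'rV[R]_n) (A : set 'rV[R]_n) : \bar R :=
  ereal_inf [set (enorm (x - s))%:E | s in A].

Definition dist0 (A : set 'rV[R]_n) : \bar R := edist_set 0 A.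

Definition subdiff (phi : 'rV[R]_n -> R) (x : 'rV[R]_n) : set 'rV[R]_n :=
  [set u | forall y, phi x + ip u (y - x) <= phi y].

Definition cone (A : set 'rV[R]_n) : set 'rV[R]_n :=
  [set v | exists (k : nat) (lam : 'I_k -> R) (w : 'I_k -> 'rV[R]_n),
     (forall i, 0 <= lam i) /\ (forall i, A (w i)) /\ v = \sum_(i < k) lam i *: w i].

Variable Z : pseudoMetricType R.

Definition supnorm (T : set Z) (b : Z -> R) : R := sup [set `|b t| | t in T].

(* feasible set and optimal set of P(c,b): min <c,x> s.t. <a_t,x> <= b_t, t in T *)
Definition feasible (T : set Z) (a : Z -> 'rV[R]_n) (b : Z -> R) : set 'rV[R]_n :=
  [set x | forall t, T t -> ip (a t) x <= b t].
Definition Sol (T : set Z) (a : Z -> 'rV[R]_n) (c : 'rV[R]_n) (b : Z -> R)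
  : set 'rV[R]_n :=
  [set x | feasible T a b x /\ forall y, feasible T a b y -> ip c x <= ip c y].

Definition active (T : set Z) (a : Z -> 'rV[R]_n) (b : Z -> R) (x : 'rV[R]_n)
  : set Z := [set t | T t /\ ip (a t) x = b t].

End LSIP.

(* Quotient num / den in \bar R, with the convention num/0 = +oo
   (in particular 0/0 = +oo) and num/(+oo) = 0. *)
Definition equot (R : realType) (num : R) (den : \bar R) : \bar R :=
  match den with
  | r%:E => if r == 0 then +oo%E else (num / r)%:E
  | +oo%E => 0%E
  | -oo%E => +oo%E
  end.

(* q-order calmness modulus of S : Y ⇉ R^n at (ybar, xbar), where the
   parameter space is the subset Ydom of Y with distance dY:
   liminf_{y -> ybar, x -> xbar, x in S y} dY(y,ybar)^q / d(x, S ybar). *)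
Definition clm (R : realType) (n : nat) (Y : Type) (Ydom : set Y)
  (dY : Y -> Y -> R) (S : Y -> set 'rV[R]_n) (q : R) (ybar : Y) (xbar : 'rV[R]_n)
  : \bar R :=
  ereal_sup [set ereal_inf
     ((fun yx : Y * 'rV[R]_n =>
         equot (powR (dY yx.1 ybar) q) (edist_set yx.2 (S ybar))) @`
      [set yx : Y * 'rV[R]_n | Ydom yx.1 /\ S yx.1 yx.2 /\
             dY yx.1 ybar < delta /\ enorm (yx.2 - xbar) < delta])
     | delta in [set d : R | 0 < d]].

(* Data of the statement specialised to the LSIP with f = 0, g_t = <a_t, .> *)
Section Kfam.
Variables (R : realType) (n : nat) (Z : pseudoMetricType R).
Variables (T : set Z) (a : Z -> 'rV[R]_n) (cbar : 'rV[R]_n) (bbar : Z -> R)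
          (xbar : 'rV[R]_n).

Definition fzero : 'rV[R]_n -> R := fun _ => 0.
Definition gcon (t : Z) : 'rV[R]_n -> R := fun x => ip (a t) x.

Definition Kfam : set (set Z) :=
  [set D : set Z | (D `<=` active T a bbar xbar)%classic /\
     (exists s : seq Z, D = [set` s] /\ (size s <= n)%N) /\
     exists u, subdiff fzero xbar u /\
       cone (\bigcup_(t in D) subdiff (gcon t) xbar) (- (u + cbar))].

Definition fD (D : set Z) (x : 'rV[R]_n) : R :=
  sup ([set gcon t x - bbar t | t in T `\` D] `|` [set `|gcon t x - bbar t| | t in D]).

Definition rhs_term (q : R) (D : set Z) : \bar R :=
  ereal_sup [set ereal_inf
     ((fun x => ((powR (fD D x) (q - 1))%:E * dist0 (subdiff (fD D) x))%E) @`
      [set x | 0 < fD D x /\ enorm (x - xbar) < delta])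
     | delta in [set d : R | 0 < d]].

Definition rhs (q : R) : \bar R := ereal_inf [set rhs_term q D | D in Kfam].
End Kfam.

(* Main.v *)
Require Import Defs.
From HB Require Import structures.
From mathcomp Require Import all_boot all_order all_algebra.
From mathcomp Require Import all_classical all_reals all_analysis.
From mathcomp Require Import ring lra.
Import Order.TTheory GRing.Theory Num.Theory.
Import numFieldNormedType.Exports.
Set Implicit Arguments. Unset Strict Implicit. Unset Printing Implicit Defensive.
Local Open Scope classical_set_scope.
Local Open Scope ring_scope.

Section IP.
Variables (R : realType) (n : nat).
Implicit Types u v w z : 'rV[R]_n.

Lemma ipDl u v w : ip (u + v) w = ip u w + ip v w.
Proof. by rewrite /ip -big_split; apply: eq_bigr => i _; rewrite mxE mulrDl. Qed.
Lemma ipDr u v w : ip w (u + v) = ip w u + ip w v.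
Proof. by rewrite /ip -big_split; apply: eq_bigr => i _; rewrite mxE mulrDr. Qed.
Lemma ipNl u w : ip (- u) w = - ip u w.
Proof. by rewrite /ip -sumrN; apply: eq_bigr => i _; rewrite mxE mulNr. Qed.
Lemma ipNr u w : ip w (- u) = - ip w u.
Proof. by rewrite /ip -sumrN; apply: eq_bigr => i _; rewrite mxE mulrN. Qed.
Lemma ipBl u v w : ip (u - v) w = ip u w - ip v w.
Proof. by rewrite ipDl ipNl. Qed.
Lemma ipBr u v w : ip w (u - v) = ip w u - ip w v.
Proof. by rewrite ipDr ipNr. Qed.
Lemma ipZl (l : R) u w : ip (l *: u) w = l * ip u w.
Proof. by rewrite /ip mulr_sumr; apply: eq_bigr => i _; rewrite mxE mulrA. Qed.
Lemma ip0l w : ip 0 w = 0.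
Proof. by rewrite /ip big1 // => i _; rewrite mxE mul0r. Qed.
Lemma ip_suml k (lam : 'I_k -> R) (W : 'I_k -> 'rV[R]_n) z :
  ip (\sum_(i < k) lam i *: W i) z = \sum_(i < k) lam i * ip (W i) z.
Proof.
elim: k lam W => [|k IH] lam W; first by rewrite !big_ord0 ip0l.
by rewrite !big_ord_recr /= ipDl ipZl IH.
Qed.

Lemma ip_ge0 v : 0 <= ip v v.
Proof. by apply: sumr_ge0 => i _; rewrite -expr2 sqr_ge0. Qed.

Lemma ip_eq0 v : ip v v <= 0 -> v = 0.
Proof.
move=> h; have h0 : ip v v = 0 by apply/eqP; rewrite eq_le h ip_ge0.
apply/matrixP => i j; rewrite (ord1 i) mxE.
have hp : forall k : 'I_n, true -> 0 <= v ord0 k * v ord0 k.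
  by move=> k _; rewrite -expr2 sqr_ge0.
by have /eqP := (@psumr_eq0P _ _ _ _ hp h0 j isT); rewrite mulf_eq0 orbb => /eqP.
Qed.

Lemma enorm_ge0 v : 0 <= enorm v.
Proof. exact: sqrtr_ge0. Qed.
Lemma enorm_sq v : enorm v ^+ 2 = ip v v.
Proof. by rewrite sqr_sqrtr // ip_ge0. Qed.
Lemma enorm_eq0 v : enorm v = 0 -> v = 0.
Proof. by move=> h; apply: ip_eq0; rewrite -enorm_sq h expr0n. Qed.
Lemma enorm0 : enorm (0 : 'rV[R]_n) = 0.
Proof. by rewrite /enorm ip0l sqrtr0. Qed.
Lemma enormN v : enorm (- v) = enorm v.
Proof. by rewrite /enorm ipNl ipNr opprK. Qed.

Lemma ipC u v : ip u v = ip v u.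
Proof. by apply: eq_bigr => i _; rewrite mulrC. Qed.

Lemma CS u v : ip u v <= enorm u * enorm v.
Proof.
set al := enorm v; set be := enorm u.
have E : \sum_(i < n) (al * u ord0 i - be * v ord0 i) ^+ 2
   = al ^+ 2 * ip u u - (2 * al * be) * ip u v + be ^+ 2 * ip v v.
  rewrite /ip !mulr_sumr -sumrN -!big_split /=.
  by apply: eq_bigr => i _; ring.
have H : 0 <= \sum_(i < n) (al * u ord0 i - be * v ord0 i) ^+ 2.
  by apply: sumr_ge0 => i _; rewrite sqr_ge0.
rewrite E -!enorm_sq -/al -/be in H.
have [al0|alp] := eqVneq al 0.
  by rewrite al0 mulr0; have /enorm_eq0 -> : enorm v = 0 by []; rewrite ipC ip0l.
have [be0|bep] := eqVneq be 0.
  by rewrite be0 mul0r; have /enorm_eq0 -> : enorm u = 0 by []; rewrite ip0l.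
have alg : 0 < al by rewrite lt_neqAle eq_sym alp enorm_ge0.
have beg : 0 < be by rewrite lt_neqAle eq_sym bep enorm_ge0.
have abg : 0 < al * be by rewrite mulr_gt0.
rewrite mulrC.
have : (2 * al * be) * ip u v <= (2 * al * be) * (al * be) by nra.
by rewrite ler_pM2l ?mulr_gt0.
Qed.

Lemma coord_le v i : `|v ord0 i| <= enorm v.
Proof.
rewrite -sqrtr_sqr /enorm ler_sqrt ?ip_ge0 // /ip (bigD1 i) //= expr2 lerDl.
by apply: sumr_ge0 => j _; rewrite -expr2 sqr_ge0.
Qed.

Lemma ip_continuous x : continuous (fun v : 'rV[R]_n => ip v x).
Proof.
rewrite /ip; apply: continuous_big; first exact: add_continuous.
move=> i _ M; apply: (@continuous_comp _ _ _ (fun v : 'rV[R]_n => v ord0 i) (fun r : R => r * x ord0 i)); first exact: coord_continuous.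
by apply: continuousM; [exact: cvg_id | exact: cvg_cst].

Qed.

Lemma subdiff_eq w v z : (forall y, ip w (y - z) <= ip v (y - z)) -> w = v.
Proof.
move=> h; have := h ((w - v) + z); rewrite addrK -subr_le0 -ipBl => /ip_eq0.
by move/eqP; rewrite subr_eq0 => /eqP.
Qed.
End IP.
Lemma sup_le_bound (R : realType) (E : set R) (L : R) :
  0 <= L -> (forall e, E e -> e <= L) -> sup E <= L.
Proof.
move=> L0 h; case: (pselect (E !=set0)) => [ne|ne]; first exact: ge_sup.
have -> : E = set0 by apply/eqP; apply: contra_notT ne => /set0P.
by rewrite sup0.
Qed.

Lemma le_sup_elem (R : realType) (E : set R) (L e : R) :
  (forall x, E x -> x <= L) -> E e -> e <= sup E.
Proof.
move=> h Ee; apply: sup_upper_bound => //; split; first by exists e.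
by exists L.
Qed.

Lemma supnorm_ge0 (R : realType) (Z : pseudoMetricType R) (T : set Z) (b : Z -> R) :
  0 <= supnorm T b.
Proof.
rewrite /supnorm; case: (pselect (has_sup [set `|b t| | t in T])) => [hs|hs].
  case: (hs) => [[y [t Tt ty]] _].
  apply: le_trans (normr_ge0 (b t)) _; apply: sup_upper_bound => //.
  by exists t.
by rewrite sup_out.
Qed.

Lemma cont_bound (R : realType) (Z : pseudoMetricType R) (T : set Z) (f : Z -> R) :
  compact T -> {within T, continuous f} -> exists M, forall t, T t -> `|f t| <= M.
Proof.
move=> cT cf; have := compact_bounded (continuous_compact cf cT).
case=> M0 [_ HM]; exists (M0 + 1) => t Tt.
apply: (HM (M0 + 1)); first by rewrite ltrDl.
by exists t.
Qed.

Unset Implicit Arguments.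
Theorem corollary4p12 (R : realType) (n : nat) (Z : pseudoMetricType R)
  (T : set Z) (a : Z -> 'rV[R]_n) (q : R) (cbar : 'rV[R]_n) (bbar : Z -> R)
  (xbar : 'rV[R]_n) :
  hausdorff_space Z ->
  compact T -> T != setT ->
  {within T, continuous a} ->
  0 < q <= 1 ->
  {within T, continuous bbar} ->
  Sol T a cbar bbar = [set xbar] ->
  (exists xh : 'rV[R]_n, forall t, T t -> ip (a t) xh < bbar t) ->
  let clmS :=
    clm (fun y : 'rV[R]_n * (Z -> R) => {within T, continuous y.2})
        (fun y y' => Num.max (enorm (y.1 - y'.1)) (supnorm T (y.2 - y'.2)))
        (fun y => Sol T a y.1 y.2) q (cbar, bbar) xbar in
  let clmSc :=
    clm (fun b : Z -> R => {within T, continuous b})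
        (fun b b' => supnorm T (b - b'))
        (fun b => Sol T a cbar b) q bbar xbar in
  (clmS <= clmSc)%E /\ (clmSc <= rhs T a cbar bbar xbar q)%E.
Proof.
move=> _ cT _ ca /andP[q0 q1] cb Sol1 _ clmS clmSc.
have xbS : Sol T a cbar bbar xbar by rewrite Sol1.
have [xbF _] := xbS.
have dist x : edist_set x (Sol T a cbar bbar) = (enorm (x - xbar))%:E.
  by rewrite Sol1 /edist_set image_set1 ereal_inf1.
split.
  rewrite /clmS /clmSc /clm.
  apply: ge_ereal_sup => _ [d d0 <-].
  apply: le_trans; last by apply: ereal_sup_ubound; exists d.
  apply: le_ereal_inf_tmp => _ [[b x] /= [Hb [Hx [Hd Hxd]]] <-].
  apply: ereal_inf_lbound; exists ((cbar, b), x) => /=.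
    by split; [|split; [|split]] => //=; rewrite subrr enorm0 max_r ?supnorm_ge0.
  by rewrite subrr enorm0 max_r ?supnorm_ge0.

rewrite /clmSc /rhs.
apply: le_ereal_inf_tmp => _ [D KD <-].
case: KD => [Dact [[s [Ds _]] [u [Hu Hcone]]]].
have u0 : u = 0.
  apply: (@subdiff_eq _ _ u 0 xbar) => y; rewrite ip0l.
  by have := Hu y; rewrite /fzero add0r.
case: Hcone => k [lam [w [lam0 [wD Ec]]]].
have wa : forall i, exists t, D t /\ w i = a t.
  move=> i; case: (wD i) => t Dt Hw; exists t; split => //.
  apply: (@subdiff_eq _ _ _ _ xbar) => y.
  by have := Hw y; rewrite /gcon => h; rewrite [ip (a t) _]ipBr; lra.
have ipc y : {within T, continuous (fun t => ip (a t) y)}.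
  by apply: (@within_continuous_comp _ _ _ T a (fun v => ip v y)) => // v _;
     exact: ip_continuous.
have [K [K0 HK]] : exists K, 0 <= K /\
    forall t, T t -> forall v, `|ip (a t) v| <= K * enorm v.
  have cc i : {within T, continuous (fun t => a t ord0 i)}.
    by apply: (@within_continuous_comp _ _ _ T a (fun v : 'rV[R]_n => v ord0 i)) => // v _;
       exact: coord_continuous.
  have /choice [A HA] : forall i : 'I_n, exists M : R,
      forall t, T t -> `|a t ord0 i| <= M.
    by move=> i; exact: cont_bound.
  exists (\sum_(i < n) `|A i|); split; first by apply: sumr_ge0 => i _.
  move=> t Tt v; rewrite /ip mulr_suml.
  apply: le_trans (ler_norm_sum _ _ _) _.
  apply: ler_sum => i _; rewrite normrM.
  apply: ler_pM => //; last exact: coord_le.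
  by apply: le_trans (HA i t Tt) _; exact: ler_norm.
have gbound y t : T t -> ip (a t) y - bbar t <= K * enorm (y - xbar)
    /\ (D t -> `|ip (a t) y - bbar t| <= K * enorm (y - xbar)).
  move=> Tt; have h1 := HK t Tt (y - xbar); rewrite ipBr in h1.
  have h2 := xbF t Tt.
  split; first by move: h1; rewrite ler_norml => /andP[_ h]; lra.
  by move=> Dt; have [_ <-] := Dact t Dt.
have Ele y e : ([set gcon a t y - bbar t | t in T `\` D] `|`
    [set `|gcon a t y - bbar t| | t in D]) e -> e <= K * enorm (y - xbar).
  case=> [[t [Tt _] <-]|[t Dt <-]]; first by case: (gbound y t Tt).
  by case: (gbound y t (proj1 (Dact t Dt))) => _; apply.
have fDle y : fD T a bbar D y <= K * enorm (y - xbar).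
  by apply: sup_le_bound; [rewrite mulr_ge0 ?enorm_ge0 | exact: Ele].
apply: ge_ereal_sup => _ [d d0 <-].
have K1 : 0 < K + 1 by lra.
set r := d / (K + 1).
have r0 : 0 < r by rewrite divr_gt0.
have rK : r * (K + 1) = d by rewrite /r divfK // gt_eqF.
set dl := Num.min d r.
have dl0 : 0 < dl by rewrite lt_min d0 r0.
apply: le_trans; last first.
  apply: ereal_sup_ubound; exists dl; [exact: dl0 | reflexivity].
apply: le_ereal_inf_tmp => _ [x [fpos xn] <-].
set eps := fD T a bbar D x.
set e := enorm (x - xbar).
have epos : 0 < eps := fpos.
have epsle : eps <= K * e := fDle x.
have e0 : 0 < e.
  rewrite lt_neqAle enorm_ge0 andbT; apply/eqP => ee.
  by move: epsle; rewrite -ee mulr0 => h; rewrite /eps in h; lra.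
have elt : e < dl := xn.
have edr : e <= r by apply: ltW; apply: lt_le_trans elt _; rewrite ge_min lexx orbT.
have edd : e < d by apply: lt_le_trans elt _; rewrite ge_min lexx.
have Kd : K * e < d.
  have : K * e <= K * r by rewrite ler_wpM2l.
  by move: rK; nra.
have inE z : ([set gcon a t x - bbar t | t in T `\` D] `|`
    [set `|gcon a t x - bbar t| | t in D]) z -> z <= eps.
  by move=> hz; apply: (le_sup_elem (L := K * e)) => //; exact: Ele.
have gle t : T t -> ip (a t) x - bbar t <= eps.
  move=> Tt; case: (pselect (D t)) => Dt.
    apply: le_trans (ler_norm _) _; apply: inE; right; exists t => //.
  by apply: inE; left; exists t.
have gge t : D t -> - eps <= ip (a t) x - bbar t.
  move=> Dt; have : `|ip (a t) x - bbar t| <= eps.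
    by apply: inE; right; exists t.
  by rewrite ler_norml => /andP[].
pose b := fun t => Num.max (ip (a t) x) (bbar t - eps).
have bge t : bbar t - eps <= b t by rewrite /b le_max lexx orbT.
have ble t : T t -> b t <= bbar t + eps.
  by move=> Tt; rewrite /b ge_max; apply/andP; split; [have := gle t Tt; lra| lra].
have sle : supnorm T (b - bbar) <= eps.
  apply: sup_le_bound; first lra.
  move=> _ [t Tt <-]; rewrite !fctE ler_norml; apply/andP; split.
    by have := bge t; lra.
  by have := ble t Tt; lra.
apply: le_trans.
  apply: ereal_inf_lbound; exists (b, x); last reflexivity.
  split; [|split; [|split]] => //=.
  - move=> t; apply: (@continuous_max R (subspace T) (fun t => ip (a t) x) (fun t => bbar t - eps) t); first exact: ipc.
    by apply: continuousB; [exact: cb | exact: cvg_cst].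
  - split; first by move=> t Tt; rewrite /b le_max lexx.
    move=> y Fy; rewrite -subr_ge0 -ipBr.
    have Ec' : cbar = - \sum_(i < k) lam i *: w i by rewrite -Ec u0 add0r opprK.
    rewrite Ec' ipNl ip_suml oppr_ge0; apply: sumr_le0 => i _.
    apply: mulr_ge0_le0 (lam0 i) _.
    case: (wa i) => t [Dt ->]; rewrite ipBr.
    have Tt := proj1 (Dact t Dt).
    have bt : b t = ip (a t) x by rewrite /b max_l //; have := gge t Dt; lra.
    by have := Fy t Tt; rewrite bt; lra.
  - lra.
rewrite /= dist /equot gt_eqF //.
have key z : subdiff (fD T a bbar D) x z -> eps <= enorm z * e.
  move=> hz; have h1 := hz xbar; rewrite -opprB ipNr in h1.
  have h2 := fDle xbar; rewrite subrr enorm0 mulr0 in h2.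
  have := CS z (x - xbar); rewrite -/e; move: h1; rewrite -/eps; lra.
have pp : 0 < powR eps (q - 1) by apply: powR_gt0.
have pq : powR eps q = powR eps (q - 1) * eps.
  by rewrite -{3}(powRr1 (ltW epos)) -powRD ?subrK // implybE gt_eqF // orbT.
have ps : powR (supnorm T (b - bbar)) q <= powR eps q.
  by apply: ge0_ler_powR => //; rewrite ?nnegrE ?supnorm_ge0 ?ltW.
apply: (@le_trans _ _ ((powR eps (q - 1))%:E * (eps / e)%:E)%E).
  rewrite -EFinM lee_fin mulrA -pq; apply: ler_wpM2r => //.
  by rewrite invr_ge0 ltW.
apply: lee_wpmul2l; first by rewrite lee_fin ltW.
apply: le_ereal_inf_tmp => _ [z hz <-].
by rewrite lee_fin sub0r enormN ler_pdivrMr //; exact: key.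
Qed.
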